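(* Let $F_1,\dots,F_n:\mathbb{R}^d\to\mathbb{R}^d$, $F=\frac1n\sum_{i=1}^nF_i$, and let $x^*$ satisfy $F(x^* )=0$. Assume $F$ is $L$-Lipschitz and $\mu$-quasi strongly monotone ($\mu>0$), and that the Expected Residual condition holds with parameter $\delta>0$ for $g=F_v$, $v\sim\mathcal D$. Let $\sigma_*^2=\mathbb{E}\|F_v(x^* )\|^2<\infty$. Run SPEG with $\gamma_k=\omega_k=\omega$ for all $k$, where $0<\omega\le\min\{\frac{\mu}{18\delta},\frac{1}{4L}\}$. Then for all $k\ge0$, $$R_k^2\le\Big(1-\frac{\omega\mu}{2}\Big)^kR_0^2+\frac{24\omega\sigma_*^2}{\mu},$$ where $R_k^2:=\mathbb{E}\big[\|x_k-x^*\|^2+\|x_k-\hat x_{k-1}\|^2\big]$. Consequently, for any $\varepsilon>0$, choosing $\omega=\min\{\frac{\mu}{18\delta},\frac1{4L},\frac{\varepsilon\mu}{48\sigma_*^2}\}$, SPEG achieves $\mathbb{E}\|x_K-x^*\|^2\le\varepsilon$ after any $$K\ge\max\Big\{\frac{8L}{\mu},\frac{36\delta}{\mu^2},\frac{96\sigma_*^2}{\varepsilon\mu^2}\Big\}\log\Big(\frac{2R_0^2}{\varepsilon}\Big)$$ iterations.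
   Context: Problem: find $x^*$ with $F(x^* )=0$. $F$ is $L$-Lipschitz: $\|F(x)-F(y)\|\le L\|x-y\|$. $\mu$-quasi strongly monotone: $\langle F(x),x-x^*\rangle\ge\mu\|x-x^*\|^2$ for all $x$. A sampling distribution $\mathcal D$ is a distribution of a random vector $v\in\mathbb{R}^n_+$ with $\mathbb{E}_{\mathcal D}[v_i]=1$ for all $i$; $F_v(x):=\frac1n\sum_{i=1}^nv_iF_i(x)$. Expected Residual condition with parameter $\delta$: $\mathbb{E}\|(F_v(x)-F_v(x^* ))-(F(x)-F(x^* ))\|^2\le\frac\delta2\|x-x^*\|^2$ for all $x$. SPEG (stochastic past extragradient): given $x_0$, set $\hat x_{-1}=x_0$ and for $k\ge0$: $\hat x_k=x_k-\gamma_kF_{v_{k-1}}(\hat x_{k-1})$, $x_{k+1}=x_k-\omega_kF_{v_k}(\hat x_k)$, where $v_{-1},v_0,v_1,\dots$ are i.i.d. samples from $\mathcal D$. Expectations are over all randomness of the algorithm. *)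

(* Defs.v *)
From HB Require Import structures.
From mathcomp Require Import all_boot all_order all_algebra.
From mathcomp Require Import all_classical all_reals all_analysis.
Set Implicit Arguments. Unset Strict Implicit. Unset Printing Implicit Defensive.
Import Order.TTheory GRing.Theory Num.Theory.
Local Open Scope ring_scope.

Section SPEGDefs.
Variable R : realType.

Definition sqnorm {d : nat} (x : 'rV[R]_d) : R := \sum_(j < d) x 0 j ^+ 2.
Definition enorm {d : nat} (x : 'rV[R]_d) : R := Num.sqrt (sqnorm x).
Definition dotv {d : nat} (x y : 'rV[R]_d) : R := \sum_(j < d) x 0 j * y 0 j.

Definition Fbar {n d : nat} (F : 'I_n -> 'rV[R]_d -> 'rV[R]_d) (x : 'rV[R]_d)
  : 'rV[R]_d := n%:R^-1 *: \sum_(i < n) F i x.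

(* F_v = (1/n) sum_i v_i F_i, where the sample vector v in R^n is w s *)
Definition Fv {n d : nat} {V : Type} (F : 'I_n -> 'rV[R]_d -> 'rV[R]_d)
  (w : V -> 'I_n -> R) (s : V) (x : 'rV[R]_d) : 'rV[R]_d :=
  n%:R^-1 *: \sum_(i < n) w s i *: F i x.

(* One run of SPEG with constant step sizes gamma, omega.
   speg_run x xh vprev l: current iterate x = x_k, xh = \hat x_{k-1},
   vprev = v_{k-1}, and l = [v_k; v_{k+1}; ...] the remaining samples.
   Returns the pair (x_{k+m}, \hat x_{k+m-1}) where m = size l. *)
Fixpoint speg_run {n d : nat} {V : Type} (F : 'I_n -> 'rV[R]_d -> 'rV[R]_d)
  (w : V -> 'I_n -> R) (gamma omega : R)
  (x xh : 'rV[R]_d) (vprev : V) (l : seq V) : 'rV[R]_d * 'rV[R]_d :=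
  match l with
  | [::] => (x, xh)
  | v :: l' =>
      let xh' := x - gamma *: Fv F w vprev xh in
      speg_run F w gamma omega (x - omega *: Fv F w v xh') xh' v l'
  end.

(* Given the sample sequence s = [v_{-1}; v_0; ...; v_{k-1}] (size k+1),
   speg_iter returns (x_k, \hat x_{k-1}); x_0 given, \hat x_{-1} = x_0. *)
Definition speg_iter {n d : nat} {V : Type} (F : 'I_n -> 'rV[R]_d -> 'rV[R]_d)
  (w : V -> 'I_n -> R) (gamma omega : R) (x0 : 'rV[R]_d) (s : seq V)
  : 'rV[R]_d * 'rV[R]_d :=
  match s with
  | [::] => (x0, x0)
  | v :: l => speg_run F w gamma omega x0 x0 v l
  end.

(* Expectation of a function of m i.i.d. samples from D:
   the integral with respect to the m-fold product law D^{(x) m},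
   written as iterated integrals. *)
Fixpoint Eiid {dV : measure_display} {V : measurableType dV}
  (D : probability V R) (m : nat) (g : seq V -> \bar R) : \bar R :=
  match m with
  | 0 => g [::]
  | m'.+1 => (\int[D]_v Eiid D m' (fun s => g (v :: s)))%E
  end.

Definition SPEG_R2 {n d : nat} {dV : measure_display} {V : measurableType dV}
  (D : probability V R) (F : 'I_n -> 'rV[R]_d -> 'rV[R]_d)
  (w : V -> 'I_n -> R) (gamma omega : R) (x0 xs : 'rV[R]_d) (k : nat)
  : \bar R :=
  Eiid D k.+1 (fun s => let p := speg_iter F w gamma omega x0 s in
                 (sqnorm (p.1 - xs) + sqnorm (p.1 - p.2))%:E).

Definition SPEG_dist2 {n d : nat} {dV : measure_display} {V : measurableType dV}
  (D : probability V R) (F : 'I_n -> 'rV[R]_d -> 'rV[R]_d)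
  (w : V -> 'I_n -> R) (gamma omega : R) (x0 xs : 'rV[R]_d) (k : nat)
  : \bar R :=
  Eiid D k.+1 (fun s => (sqnorm ((speg_iter F w gamma omega x0 s).1 - xs))%:E).

End SPEGDefs.

(* Main.v *)
Require Import Defs.
From HB Require Import structures.
From mathcomp Require Import all_boot all_order all_algebra.
From mathcomp Require Import all_classical all_reals all_analysis.
From mathcomp Require Import ring lra.
From mathcomp Require Import measurable_realfun.
Import Order.TTheory GRing.Theory Num.Theory.
Set Implicit Arguments. Unset Strict Implicit. Unset Printing Implicit Defensive.
Local Open Scope ring_scope.


Section Integ.
Local Open Scope ereal_scope.
Context (R : realType) (dV : measure_display) (V : measurableType dV)
  (P : probability V R).
Import HBNNSimple.

Lemma le_int_nm (f g : V -> \bar R) : (forall v, 0 <= f v) ->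
  (forall v, f v <= g v) -> \int[P]_v f v <= \int[P]_v g v.
Proof.
move=> f0 fg; have g0 v : 0 <= g v by apply: le_trans (f0 v) (fg v).
rewrite !ge0_integralTE //; apply: ge_ereal_sup => _ [h hf <-].
apply: ereal_sup_ubound; exists h => //= v; exact: le_trans (hf v) (fg v).
Qed.

Lemma int_cst (c : \bar R) : \int[P]_v c = c.
Proof.
rewrite (integral_cst P measurableT c); transitivity (c * 1); last exact: mule1.
congr (_ * _); exact: probability_setT.
Qed.

Lemma SL (f1 f2 : V -> \bar R) (a c : R) : (0 <= a)%R -> (0 <= c)%R ->
  (forall v, 0 <= f1 v) -> (forall v, 0 <= f2 v) ->
  (forall v, f1 v <= a%:E * f2 v + c%:E) ->
  \int[P]_v f1 v <= a%:E * \int[P]_v f2 v + c%:E.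
Proof.
move=> a0 c0 f10 f20 H.
rewrite ge0_integralTE //; apply: ge_ereal_sup => _ [h hf1 <-] /=.
have := integral_nnsfun P measurableT h; rewrite patch_setT => <-.
have mh : measurable_fun setT (fun v => h v) := measurable_funPT h.
have hge0 v : (0 <= h v)%R by exact: fun_ge0.
have [a00|apos] := eqVneq a 0%R.
  subst a.
  rewrite mul0e add0e.
  apply: (@le_trans _ _ (\int[P]_v c%:E)); last by rewrite int_cst.
  apply: ge0_le_integral => //.
  - by move=> v _; rewrite lee_fin.
  - by apply/measurable_realfun.measurable_EFinP.
  - by move=> v _; have := le_trans (hf1 v) (H v); rewrite mul0e add0e.
have agt0 : (0 < a)%R by rewrite lt_def apos a0.
pose k v := (Num.max (h v - c) 0 / a)%R.
have k0 v : (0 <= k v)%R by rewrite /k divr_ge0 // le_max lexx orbT.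
have mk : measurable_fun setT k.
  apply: measurable_realfun.measurable_funM; last exact: measurable_cst.
  apply: measurable_realfun.measurable_maxr; last exact: measurable_cst.
  by apply: measurable_realfun.measurable_funB => //; exact: measurable_cst.
have mak : measurable_fun setT (fun v => @EFin R (a * k v)%R).
  by apply/measurable_realfun.measurable_EFinP; apply: measurable_realfun.measurable_funM => //; exact: measurable_cst.
apply: (@le_trans _ _ (\int[P]_v ((a * k v)%:E + c%:E))).
  apply: ge0_le_integral => //.
  all: try (by move=> v _; rewrite lee_fin).
  all: try (by apply/measurable_realfun.measurable_EFinP).
  all: try (by apply: emeasurable_funD => //; exact: measurable_cst).
  move=> v _; rewrite -EFinD lee_fin /k mulrCA divff ?mulr1 //.
    by rewrite -lerBlDr le_max lexx.
rewrite ge0_integralD //.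
all: try (by move=> v _; rewrite lee_fin; apply: mulr_ge0).
all: try exact: measurable_cst.
all: try exact: mak.
rewrite int_cst leeD2r // (_ : (fun v => (a * k v)%:E) = (fun v => a%:E * (k v)%:E)); last first.
  by apply/funext => v; rewrite EFinM.
rewrite ge0_integralZl_EFin //.
all: try (by move=> v _; rewrite lee_fin).
all: try (by apply/measurable_realfun.measurable_EFinP).
rewrite lee_pmul2l ?lte_fin //.
apply: le_int_nm => v; first by rewrite lee_fin.
have := H v; have := f20 v; case: (f2 v) => [r| |] //= r0 Hv; last by rewrite leey.
rewrite lee_fin /k ler_pdivrMr // mulrC ge_max; apply/andP; split.
  by rewrite lerBlDr -lee_fin EFinD EFinM (le_trans (hf1 v)).
by rewrite mulr_ge0 // -lee_fin.
Qed.

Lemma int_addc (f : V -> R) (c : R) : measurable_fun setT f ->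
  (forall v, 0 <= f v)%R -> (forall v, 0 <= f v + c)%R ->
  \int[P]_v (f v + c)%:E = \int[P]_v (f v)%:E + c%:E.
Proof.
move=> mf f0 fc0.
have [c0|c0] := leP 0%R c.
  under eq_integral do rewrite EFinD.
  have mfE : measurable_fun setT (fun v => @EFin R (f v)) by apply/measurable_realfun.measurable_EFinP.
  rewrite ge0_integralD //.
  all: try (by move=> v _; rewrite lee_fin).
  all: try exact: measurable_cst.
  by rewrite int_cst.
have E : \int[P]_v (f v)%:E = \int[P]_v ((f v + c)%:E + (- c)%:E).
  by apply: eq_integral => v _; rewrite -EFinD addrK.
have mfcE : measurable_fun setT (fun v => @EFin R (f v + c)%R).
  by apply/measurable_realfun.measurable_EFinP; apply: measurable_realfun.measurable_funD => //; exact: measurable_cst.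
rewrite E ge0_integralD //.
all: try (by move=> v _; rewrite lee_fin ?fc0 ?oppr_ge0 ?ltW).
all: try exact: measurable_cst.
by rewrite int_cst -addeA -EFinD addNr adde0.
Qed.

Lemma Eiid_ge0 m (g : seq V -> \bar R) : (forall s, 0 <= g s) -> 0 <= Eiid P m g.
Proof.
elim: m g => [|m IH] g g0 /=; first exact: g0.
by apply: integral_ge0 => v _; apply: IH.
Qed.

Lemma Eiid_cat m k (g : seq V -> \bar R) :
  Eiid P (m + k) g = Eiid P m (fun p => Eiid P k (fun t => g (p ++ t))).
Proof.
elim: m g => [|m IH] g //=.
by apply: eq_integral => v _; rewrite IH.
Qed.

Lemma Eiid_lin m (f h : seq V -> \bar R) (a c : R) : (0 <= a)%R -> (0 <= c)%R ->
  (forall s, 0 <= f s) -> (forall s, 0 <= h s) ->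
  (forall s, size s = m -> f s <= a%:E * h s + c%:E) ->
  Eiid P m f <= a%:E * Eiid P m h + c%:E.
Proof.
move=> a0 c0; elim: m f h => [|m IH] f h f0 h0 H /=; first exact: H.
apply: SL => //.
- by move=> v; apply: Eiid_ge0.
- by move=> v; apply: Eiid_ge0.
- move=> v; apply: IH => //.
  by move=> s hs; apply: H => /=; rewrite hs.
Qed.

Lemma Eiid_cst m (c : \bar R) : Eiid P m (fun _ => c) = c.
Proof. by elim: m => [|m IH] //=; under eq_integral do rewrite IH; rewrite int_cst. Qed.

End Integ.


Ltac coord := rewrite /sqnorm /dotv; rewrite ?mulr_sumr -?sumrN -?big_split /=;
  apply: eq_bigr => j _; rewrite !mxE; ring.

Section Vec.
Context (R : realType) (d : nat).
Implicit Types x y z u : 'rV[R]_d.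

Lemma sqnorm_ge0 x : 0 <= sqnorm x.
Proof. by rewrite /sqnorm; apply: sumr_ge0 => j _; rewrite sqr_ge0. Qed.

Lemma sqnorm2 x y : sqnorm (x + y) <= 2 * sqnorm x + 2 * sqnorm y.
Proof.
rewrite /sqnorm !mulr_sumr -big_split /=; apply: ler_sum => j _; rewrite mxE.
have := sqr_ge0 (x 0 j - y 0 j); nra.
Qed.

Lemma dotv_sum n (f : 'I_n -> 'rV[R]_d) u :
  dotv (\sum_(i < n) f i) u = \sum_(i < n) dotv (f i) u.
Proof.
rewrite /dotv; under eq_bigr do rewrite summxE mulr_suml.
by rewrite exchange_big.
Qed.

Lemma dotvZ k x u : dotv (k *: x) u = k * dotv x u.
Proof. by rewrite /dotv mulr_sumr; apply: eq_bigr => j _; rewrite mxE mulrA. Qed.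

Lemma enorm_sq x : enorm x ^+ 2 = sqnorm x.
Proof. by rewrite /enorm sqr_sqrtr // sqnorm_ge0. Qed.

Lemma lip_sq (L : R) x y : 0 <= L -> enorm x <= L * enorm y ->
  sqnorm x <= L ^+ 2 * sqnorm y.
Proof.
move=> L0 h; rewrite -!enorm_sq -exprMn; apply: lerXn2r => //.
- by rewrite nnegrE /enorm sqrtr_ge0.
- by rewrite nnegrE mulr_ge0 // /enorm sqrtr_ge0.
Qed.

End Vec.

Section OneSample.
Local Open Scope ereal_scope.
Context (R : realType) (n d : nat) (dV : measure_display) (V : measurableType dV)
  (P : probability V R) (w : V -> 'I_n -> R)
  (F : 'I_n -> 'rV[R]_d -> 'rV[R]_d).
Context (mw : forall i, measurable_fun setT (fun s => w s i))
  (w0 : forall s i, (0 <= w s i)%R)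
  (Ew : forall i, \int[P]_s (w s i)%:E = 1).

Definition mv (f : V -> 'rV[R]_d) := forall j, measurable_fun setT (fun s => f s 0%R j).

Lemma mv_cst (c : 'rV[R]_d) : mv (fun _ => c).
Proof. by move=> j; exact: measurable_cst. Qed.

Lemma mv_add f g : mv f -> mv g -> mv (fun s => (f s + g s)%R).
Proof.
move=> hf hg j; rewrite (_ : (fun s => _) = (fun s => f s 0%R j + g s 0%R j)%R).
  exact: measurable_realfun.measurable_funD.
by apply/funext => s; rewrite mxE.
Qed.

Lemma mv_opp f : mv f -> mv (fun s => (- f s)%R).
Proof.
move=> hf j; rewrite (_ : (fun s => _) = (fun s => - f s 0%R j)%R).
  exact: measurable_realfun.measurable_funN.
by apply/funext => s; rewrite mxE.
Qed.

Lemma mv_sub f g : mv f -> mv g -> mv (fun s => (f s - g s)%R).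
Proof. by move=> hf hg; apply: mv_add => //; apply: mv_opp. Qed.

Lemma mv_scale (k : R) f : mv f -> mv (fun s => (k *: f s)%R).
Proof.
move=> hf j; rewrite (_ : (fun s => _) = (fun s => k * f s 0%R j)%R).
  by apply: measurable_realfun.measurable_funM => //; exact: measurable_cst.
by apply/funext => s; rewrite mxE.
Qed.

Lemma Fv_coord s x j :
  Fv F w s x 0%R j = (n%:R^-1 * \sum_(i < n) w s i * F i x 0%R j)%R.
Proof. by rewrite /Fv mxE summxE; under eq_bigr do rewrite mxE. Qed.

Lemma mv_Fv x : mv (fun s => Fv F w s x).
Proof.
move=> j; under eq_fun do rewrite Fv_coord.
apply: measurable_realfun.measurable_funM; first exact: measurable_cst.
apply: measurable_sum => i.
by apply: measurable_realfun.measurable_funM => //; exact: measurable_cst.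
Qed.

Lemma meas_sqnorm f : mv f -> measurable_fun setT (fun s => sqnorm (f s)).
Proof.
move=> hf; rewrite /sqnorm; apply: measurable_sum => j.
exact: measurable_realfun.measurable_funX.
Qed.

Lemma meas_dotv f u : mv f -> measurable_fun setT (fun s => dotv (f s) u).
Proof.
move=> hf; rewrite /dotv; apply: measurable_sum => j.
by apply: measurable_realfun.measurable_funM => //; exact: measurable_cst.
Qed.

Lemma meas_E_sqnorm f : mv f -> measurable_fun setT (fun s => (sqnorm (f s))%:E).
Proof. by move=> hf; apply/measurable_EFinP; apply: meas_sqnorm. Qed.

Lemma meas_Ek_sqnorm (k : R) f : mv f -> measurable_fun setT (fun s => (k * sqnorm (f s))%:E).
Proof.
move=> hf; apply/measurable_EFinP; apply: measurable_funM; first exact: measurable_cst.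
exact: meas_sqnorm.
Qed.

Lemma w_int i : P.-integrable setT (fun s => (w s i)%:E).
Proof.
apply/integrableP; split; first by apply/measurable_realfun.measurable_EFinP.
under eq_integral do rewrite gee0_abs ?lee_fin //.
by rewrite Ew ltry.
Qed.

Lemma dotv_Fv s y u :
  dotv (Fv F w s y) u = (\sum_(i < n) w s i * (n%:R^-1 * dotv (F i y) u))%R.
Proof.
rewrite /Fv dotvZ dotv_sum mulr_sumr; apply: eq_bigr => i _.
by rewrite dotvZ mulrCA.
Qed.

Lemma lin_int y u : P.-integrable setT (fun s => (dotv (Fv F w s y) u)%:E).
Proof.
under eq_fun do rewrite dotv_Fv -sumEFin.
apply: (integrable_sum measurableT) => i _.
under eq_fun do rewrite EFinM.
exact: (integrableZr measurableT _ (w_int i)).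
Qed.

Lemma lin_E y u : \int[P]_s (dotv (Fv F w s y) u)%:E = (dotv (Fbar F y) u)%:E.
Proof.
under eq_integral do rewrite dotv_Fv -sumEFin.
rewrite (integral_sum measurableT); last first.
  by move=> i; under eq_fun do rewrite EFinM; exact: (integrableZr measurableT _ (w_int i)).
under eq_bigr do (under eq_integral do rewrite EFinM; rewrite (integralZr measurableT (w_int _)) Ew mul1e).
rewrite sumEFin /Fbar dotvZ dotv_sum mulr_sumr //.
Qed.

End OneSample.

Ltac mvtac := first [ assumption | exact: mv_cst | exact: mv_Fv
  | (apply: mv_add; mvtac) | (apply: mv_sub; mvtac) | (apply: mv_opp; mvtac)
  | (apply: mv_scale; mvtac) ].
Ltac mtac2 := lazymatch goal with
 | |- measurable_fun _ ?f => tryif has_evar f then fail else first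
 [ assumption
 | exact: measurable_cst
 | (apply: meas_E_sqnorm; mvtac)
 | (apply: meas_Ek_sqnorm; mvtac)
 | (apply: emeasurable_funD; mtac2) ]
 end.
Ltac ptac := try (by move=> ? _; rewrite ?adde_ge0 // lee_fin ?mulr_ge0 // ?sqnorm_ge0 ?addr_ge0 ?sqnorm_ge0).

Section Noise.
Local Open Scope ereal_scope.
Context (R : realType) (n d : nat) (dV : measure_display) (V : measurableType dV)
  (P : probability V R) (w : V -> 'I_n -> R)
  (F : 'I_n -> 'rV[R]_d -> 'rV[R]_d).
Context (mw : forall i, measurable_fun setT (fun s => w s i))
  (w0 : forall s i, (0 <= w s i)%R)
  (Ew : forall i, \int[P]_s (w s i)%:E = 1).
Context (xs : 'rV[R]_d) (delta sigma2 : R) (hF0 : (Fbar F xs = 0)%R)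
  (ER : forall x, (\int[P]_s (sqnorm ((Fv F w s x - Fv F w s xs)
                                 - (Fbar F x - Fbar F xs)))%:E
              <= (delta / 2 * sqnorm (x - xs))%:E)%E)
  (sig : (\int[P]_s (sqnorm (Fv F w s xs))%:E = sigma2%:E)%E).

Lemma noise y : \int[P]_s (sqnorm (Fv F w s y - Fbar F y))%:E <=
  (delta * sqnorm (y - xs) + 2 * sigma2)%:E.
Proof.
pose A s := ((Fv F w s y - Fv F w s xs) - (Fbar F y - Fbar F xs))%R.
have eqA s : (Fv F w s y - Fbar F y = A s + Fv F w s xs)%R.
  by rewrite /A hF0 subr0 addrAC subrK.
have mA : mv A.
  apply: mv_sub; first by apply: mv_sub; apply: mv_Fv.
  exact: mv_cst.
have mB : mv (fun s => Fv F w s xs) by apply: mv_Fv.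
under eq_integral do rewrite eqA.
apply: (@le_trans _ _ (\int[P]_s ((2 * sqnorm (A s))%:E + (2 * sqnorm (Fv F w s xs))%:E))).
  apply: ge0_le_integral => //; ptac; try (by mtac2).
  by move=> s _; rewrite -EFinD lee_fin sqnorm2.
rewrite ge0_integralD //; ptac; try (by mtac2).
under eq_integral do rewrite EFinM.
rewrite ge0_integralZl_EFin //; ptac; try (by mtac2).
under [X in _ + X <= _]eq_integral do rewrite EFinM.
rewrite ge0_integralZl_EFin //; ptac; try (by mtac2).
rewrite sig -EFinM.
have := ER y; rewrite -/(A _) => hER.
apply: (@le_trans _ _ (2%:E * (delta / 2 * sqnorm (y - xs))%:E + (2 * sigma2)%:E)).
  by rewrite leeD2r // lee_pmul2l // lte_fin.
by rewrite -EFinM -EFinD lee_fin; lra.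
Qed.

End Noise.



Section Vec2.
Context (R : realType) (d : nat).
Implicit Types x y z u X G g m : 'rV[R]_d.

Lemma sqnormB x y : sqnorm (x - y) = sqnorm (y - x).
Proof. coord. Qed.

Lemma sqnormZ (k : R) x : sqnorm (k *: x) = k ^+ 2 * sqnorm x.
Proof. coord. Qed.

Lemma id1 X G g m xs (om : R) :
  sqnorm (X - om *: g - xs) + sqnorm (X - om *: g - (X - om *: G)) =
  (sqnorm (X - xs) + 2 * om ^+ 2 * sqnorm (m - G) - om ^+ 2 * sqnorm G
   - 4 * om ^+ 2 * dotv m (m - G))
  + dotv g (- (2 * om) *: ((X - om *: G) - xs) + (4 * om ^+ 2) *: (m - G))
  + 2 * om ^+ 2 * sqnorm (g - m).
Proof. coord. Qed.

Lemma id2 X G m xs (om : R) :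
  (sqnorm (X - xs) + 2 * om ^+ 2 * sqnorm (m - G) - om ^+ 2 * sqnorm G
   - 4 * om ^+ 2 * dotv m (m - G))
  + dotv m (- (2 * om) *: ((X - om *: G) - xs) + (4 * om ^+ 2) *: (m - G)) =
  sqnorm (X - xs) - 2 * om * dotv m ((X - om *: G) - xs)
  + 2 * om ^+ 2 * sqnorm (m - G) - om ^+ 2 * sqnorm G.
Proof. coord. Qed.

End Vec2.

Lemma realQ (R : realType) (om mu delta L sigma2 A B Y Z S H N M Dt : R) :
  0 < om -> 0 < mu -> 0 <= delta -> 0 < L ->
  om * delta <= mu / 18 -> om * L <= 1 / 4 -> om * mu <= 1 / 4 ->
  0 <= A -> 0 <= B -> 0 <= Y -> 0 <= Z -> 0 <= S -> 0 <= H -> 0 <= N ->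
  H <= 2 * Y + 2 * Z -> Z <= 2 * B + 2 * S -> A <= 2 * Y + 2 * S ->
  mu * Y <= Dt -> M <= 2 * L ^+ 2 * Z + 2 * N ->
  A - 2 * om * Dt + 2 * om ^+ 2 * M - S + 2 * om ^+ 2 * (delta * Y + 2 * sigma2)
  <= (1 - om * mu / 2) * (A + B) + 4 * om ^+ 2 * N
     + (4 * om ^+ 2 * sigma2 - 4 * om ^+ 2 * delta * H).
Proof.
move=> om0 mu0 de0 L0 hq hr hp A0 B0 Y0 Z0 S0 H0 N0 hH hZ hA hD hM.
set p := om * mu. set q := om * (om * delta). set r := (om * L) ^+ 2.
have hp2 : p <= 1 / 4 := hp.
have p0 : 0 <= p by rewrite mulr_ge0 // ltW.
have q0 : 0 <= q by rewrite !mulr_ge0 // ltW.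
have qp : q <= p / 18.
  by have := ler_wpM2l (ltW om0) hq; rewrite /q /p; lra.
have r16 : r <= 1 / 16.
  have hr0 : 0 <= om * L by rewrite mulr_ge0 // ltW.
  by rewrite /r expr2; nra.
have h1 : 0 <= om * (Dt - mu * Y) by rewrite mulr_ge0 ?subr_ge0 // ltW.
have h2 : 0 <= om ^+ 2 * (2 * L ^+ 2 * Z + 2 * N - M).
  by rewrite mulr_ge0 ?subr_ge0 // sqr_ge0.
have h3 : 0 <= q * (2 * Y + 2 * Z - H) by rewrite mulr_ge0 ?subr_ge0.
have h4 : 0 <= (p - 10 * q) * Y by rewrite mulr_ge0 // subr_ge0; lra.
have h5 : 0 <= p * (2 * Y + 2 * S - A) by rewrite mulr_ge0 ?subr_ge0.
have h6 : 0 <= (4 * r + 8 * q) * (2 * B + 2 * S - Z).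
  by rewrite mulr_ge0 ?subr_ge0 // addr_ge0 // mulr_ge0 // /r sqr_ge0.
have h7 : 0 <= (1 - p / 2 - 8 * r - 16 * q) * B.
  by rewrite mulr_ge0 //; move: hp2 qp r16; clearbody p q r; lra.
have h8 : 0 <= (1 - p - 8 * r - 16 * q) * S.
  by rewrite mulr_ge0 //; move: hp2 qp r16; clearbody p q r; lra.
move: h1 h2 h3 h4 h5 h6 h7 h8; rewrite /p /q /r; nra.
Qed.

Section Inner.
Local Open Scope ereal_scope.
Context (R : realType) (n d : nat) (dV : measure_display) (V : measurableType dV)
  (P : probability V R) (w : V -> 'I_n -> R)
  (F : 'I_n -> 'rV[R]_d -> 'rV[R]_d).
Context (mw : forall i, measurable_fun setT (fun s => w s i))
  (w0 : forall s i, (0 <= w s i)%R)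
  (Ew : forall i, \int[P]_s (w s i)%:E = 1).
Context (xs : 'rV[R]_d) (delta sigma2 : R) (hF0 : (Fbar F xs = 0)%R)
  (ER : forall x, (\int[P]_s (sqnorm ((Fv F w s x - Fv F w s xs)
                                 - (Fbar F x - Fbar F xs)))%:E
              <= (delta / 2 * sqnorm (x - xs))%:E)%E)
  (sig : (\int[P]_s (sqnorm (Fv F w s xs))%:E = sigma2%:E)%E).

Lemma q_int y : P.-integrable setT (fun s => (sqnorm (Fv F w s y - Fbar F y))%:E).
Proof.
apply/integrableP; split; first by mtac2.
under eq_integral do rewrite gee0_abs ?lee_fin ?sqnorm_ge0 //.
apply: le_lt_trans (noise mw hF0 ER sig y) _.
exact: ltry.
Qed.

Lemma inner (X G : 'rV[R]_d) (om : R) :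
  \int[P]_b (sqnorm (X - om *: Fv F w b (X - om *: G) - xs)
             + sqnorm (X - om *: Fv F w b (X - om *: G) - (X - om *: G)))%:E
  <= (sqnorm (X - xs) - 2 * om * dotv (Fbar F (X - om *: G)) ((X - om *: G) - xs)
      + 2 * om ^+ 2 * sqnorm (Fbar F (X - om *: G) - G) - om ^+ 2 * sqnorm G
      + 2 * om ^+ 2 * (delta * sqnorm ((X - om *: G) - xs) + 2 * sigma2))%:E.
Proof.
set y := (X - om *: G)%R.
set m := Fbar F y.
set K := (sqnorm (X - xs) + 2 * om ^+ 2 * sqnorm (m - G) - om ^+ 2 * sqnorm G
   - 4 * om ^+ 2 * dotv m (m - G))%R.
set u := (- (2 * om) *: (y - xs) + (4 * om ^+ 2) *: (m - G))%R.
have E3 (a b k c : R) : ((a + b + k * c)%:E = a%:E + (b%:E + k%:E * c%:E))%E.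
  by rewrite !EFinD EFinM addeA.
under eq_integral do rewrite (id1 X G _ m) -/y -/K -/u E3.
rewrite integralD //; first last.
- apply: (integrableD measurableT); first exact: lin_int.
  exact: (integrableZl measurableT _ (q_int y)).
- exact: (finite_measure_integrable_cst P K measurableT).
rewrite integralD //; first last.
- exact: (integrableZl measurableT _ (q_int y)).
- exact: lin_int.
rewrite int_cst (lin_E F mw w0 Ew) (integralZl measurableT (q_int y)).
rewrite addeA -EFinD -/m /K /u /m /y id2.
rewrite [X in _ <= X]EFinD leeD2l //.
rewrite [X in _ <= X]EFinM; apply: lee_wpmul2l; first by rewrite lee_fin mulr_ge0 // sqr_ge0.
exact: noise.
Qed.


Ltac veq := apply/rowP => j; rewrite !mxE; ring.

Context (mu L om : R) (mu0 : (0 < mu)%R) (L0 : (0 < L)%R) (de0 : (0 <= delta)%R)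
  (lip : forall x y, (enorm (Fbar F x - Fbar F y) <= L * enorm (x - y))%R)
  (qsm : forall x, (mu * sqnorm (x - xs) <= dotv (Fbar F x) (x - xs))%R)
  (om0 : (0 < om)%R) (hq : (om * delta <= mu / 18)%R) (hr : (om * L <= 1 / 4)%R)
  (hp : (om * mu <= 1 / 4)%R).

Lemma twolevel (h1 : 'rV[R]_d) (X : V -> 'rV[R]_d) (mX : mv X) :
  \int[P]_a \int[P]_b
     (sqnorm (X a - om *: Fv F w b (X a - om *: Fv F w a h1) - xs)
      + sqnorm (X a - om *: Fv F w b (X a - om *: Fv F w a h1)
                - (X a - om *: Fv F w a h1)))%:E
  <= (1 - om * mu / 2)%:E * \int[P]_a (sqnorm (X a - xs) + sqnorm (X a - h1))%:E
     + (12 * om ^+ 2 * sigma2)%:E.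
Proof.
set rho := (1 - om * mu / 2)%R.
set c0 := (4 * om ^+ 2 * sigma2 - 4 * om ^+ 2 * delta * sqnorm (h1 - xs))%R.
pose g1 a := (rho * (sqnorm (X a - xs) + sqnorm (X a - h1)))%R.
pose g2 a := (4 * om ^+ 2 * sqnorm (Fv F w a h1 - Fbar F h1))%R.
have rho0 : (0 <= rho)%R by rewrite /rho; move: hp; nra.
have g10 a : (0 <= g1 a)%R by rewrite mulr_ge0 // addr_ge0 // sqnorm_ge0.
have g20 a : (0 <= g2 a)%R by rewrite mulr_ge0 ?sqnorm_ge0 // mulr_ge0 // sqr_ge0.
have mg1 : measurable_fun setT g1.
  apply: measurable_funM; first exact: measurable_cst.
  by apply: measurable_funD; apply: meas_sqnorm; mvtac.
have mg2 : measurable_fun setT g2.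
  apply: measurable_funM; first exact: measurable_cst.
  by apply: meas_sqnorm; mvtac.
have key a : (\int[P]_b
     (sqnorm (X a - om *: Fv F w b (X a - om *: Fv F w a h1) - xs)
      + sqnorm (X a - om *: Fv F w b (X a - om *: Fv F w a h1)
                - (X a - om *: Fv F w a h1)))%:E <= (g1 a + g2 a + c0)%:E).
  apply: le_trans (inner (X a) (Fv F w a h1) om) _.
  rewrite lee_fin /g1 /g2 /c0 /rho.
  set G := Fv F w a h1. set y := (X a - om *: G)%R.
  apply: (@realQ R om mu delta L sigma2 _ _ _ (sqnorm (y - h1)));
    rewrite ?sqnorm_ge0 ?mulr_ge0 ?sqr_ge0 //; rewrite ?sqnorm_ge0 ?(ltW om0) //.
  - have -> : (h1 - xs = (y - xs) + (h1 - y))%R by veq.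
    by apply: le_trans (sqnorm2 _ _) _; rewrite (sqnormB h1 y).
  - have -> : (y - h1 = (X a - h1) + (- om) *: G)%R by rewrite /y; veq.
    by apply: le_trans (sqnorm2 _ _) _; rewrite sqnormZ sqrrN.
  - have -> : (X a - xs = (y - xs) + om *: G)%R by rewrite /y; veq.
    by apply: le_trans (sqnorm2 _ _) _; rewrite sqnormZ.
  - have -> : (Fbar F y - G = (Fbar F y - Fbar F h1) + (Fbar F h1 - G))%R by veq.
    apply: le_trans (sqnorm2 _ _) _; rewrite (sqnormB (Fbar F h1) G).
    rewrite lerD2r -mulrA ler_wpM2l //.
    by apply: lip_sq; [exact: ltW | exact: lip].
have inner0 a : (0 <= \int[P]_b
     (sqnorm (X a - om *: Fv F w b (X a - om *: Fv F w a h1) - xs)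
      + sqnorm (X a - om *: Fv F w b (X a - om *: Fv F w a h1)
                - (X a - om *: Fv F w a h1)))%:E).
  by apply: integral_ge0 => b _; rewrite lee_fin addr_ge0 ?sqnorm_ge0.
apply: le_trans (le_int_nm P inner0 key) _.
rewrite int_addc //; first last.
- by move=> a; rewrite -lee_fin (le_trans (inner0 a) (key a)).
- by move=> a; rewrite addr_ge0.
- exact: measurable_funD.
under eq_integral do rewrite EFinD.
rewrite ge0_integralD //.
all: try (by move=> a _; rewrite lee_fin).
all: try (by apply/measurable_EFinP).
rewrite /g1 /g2.
under eq_integral do rewrite EFinM.
rewrite ge0_integralZl_EFin //.
all: try (by move=> a _; rewrite lee_fin addr_ge0 ?sqnorm_ge0).
all: try (by apply/measurable_EFinP; apply: measurable_funD; apply: meas_sqnorm; mvtac).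
under [X in _ + X + _ <= _]eq_integral do rewrite EFinM.
rewrite ge0_integralZl_EFin //.
all: try (by move=> a _; rewrite lee_fin sqnorm_ge0).
all: try (by apply/measurable_EFinP; apply: meas_sqnorm; mvtac).
all: try (by rewrite mulr_ge0 // sqr_ge0).
rewrite -addeA leeD2l //.
apply: (@le_trans _ _ ((4 * om ^+ 2)%:E * (delta * sqnorm (h1 - xs) + 2 * sigma2)%:E + c0%:E)).
  rewrite leeD2r //; apply: lee_wpmul2l; first by rewrite lee_fin mulr_ge0 // sqr_ge0.
  exact: noise.
by rewrite -EFinM -EFinD lee_fin /c0; lra.
Qed.

End Inner.


Section Run.
Context (R : realType) (n d : nat) (V : Type) (F : 'I_n -> 'rV[R]_d -> 'rV[R]_d)
  (w : V -> 'I_n -> R) (ga om : R).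

Fixpoint run_state (x xh : 'rV[R]_d) (vp : V) (l : seq V) : 'rV[R]_d * 'rV[R]_d * V :=
  match l with
  | [::] => (x, xh, vp)
  | v :: l' => let xh' := x - ga *: Fv F w vp xh in
      run_state (x - om *: Fv F w v xh') xh' v l'
  end.

Lemma run_cat x xh vp l t :
  speg_run F w ga om x xh vp (l ++ t) =
  let: (x', xh', vp') := run_state x xh vp l in speg_run F w ga om x' xh' vp' t.
Proof. by elim: l x xh vp => [|v l IH] x xh vp //=; rewrite IH. Qed.

End Run.

Section Main1.
Local Open Scope ereal_scope.
Context (R : realType) (n d : nat) (dV : measure_display) (V : measurableType dV)
  (P : probability V R) (w : V -> 'I_n -> R)
  (F : 'I_n -> 'rV[R]_d -> 'rV[R]_d).
Context (mw : forall i, measurable_fun setT (fun s => w s i))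
  (w0 : forall s i, (0 <= w s i)%R)
  (Ew : forall i, \int[P]_s (w s i)%:E = 1).
Context (xs x0 : 'rV[R]_d) (delta sigma2 : R) (hF0 : (Fbar F xs = 0)%R)
  (ER : forall x, (\int[P]_s (sqnorm ((Fv F w s x - Fv F w s xs)
                                 - (Fbar F x - Fbar F xs)))%:E
              <= (delta / 2 * sqnorm (x - xs))%:E)%E)
  (sig : (\int[P]_s (sqnorm (Fv F w s xs))%:E = sigma2%:E)%E).
Context (mu L om : R) (mu0 : (0 < mu)%R) (L0 : (0 < L)%R) (de0 : (0 <= delta)%R)
  (lip : forall x y, (enorm (Fbar F x - Fbar F y) <= L * enorm (x - y))%R)
  (qsm : forall x, (mu * sqnorm (x - xs) <= dotv (Fbar F x) (x - xs))%R)
  (om0 : (0 < om)%R) (hq : (om * delta <= mu / 18)%R) (hr : (om * L <= 1 / 4)%R)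
  (hp : (om * mu <= 1 / 4)%R).

Let Phi (s : seq V) : \bar R := let p := speg_iter F w om om x0 s in
  (sqnorm (p.1 - xs) + sqnorm (p.1 - p.2))%:E.

Lemma Phi0 s : 0 <= Phi s.
Proof. by rewrite /Phi lee_fin addr_ge0 ?sqnorm_ge0. Qed.

Lemma step k : Eiid P k.+2 Phi <= (1 - om * mu / 2)%:E * Eiid P k.+1 Phi
   + (12 * om ^+ 2 * sigma2)%:E.
Proof.
have rho0 : (0 <= 1 - om * mu / 2)%R by move: hp; nra.
have sig0 : (0 <= sigma2)%R.
  by rewrite -lee_fin -sig; apply: integral_ge0 => s _; rewrite lee_fin sqnorm_ge0.
case: k => [|k].
  exact: (twolevel mw w0 Ew hF0 ER sig mu0 L0 de0 lip qsm om0 hq hr hp x0 (mv_cst x0)).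
rewrite -addn2 -[in X in _ <= _ * X + _]addn1 !Eiid_cat.
apply: Eiid_lin.
- exact: rho0.
- by apply: mulr_ge0 => //; apply: mulr_ge0 => //; exact: sqr_ge0.
- by move=> s; apply: Eiid_ge0 => t; apply: Phi0.
- by move=> s; apply: Eiid_ge0 => t; apply: Phi0.
case=> [|a0 l] // _.
have E t : Phi (a0 :: l ++ t) = let: (x', xh', vp') := run_state F w om om x0 x0 a0 l in
    let p := speg_run F w om om x' xh' vp' t in (sqnorm (p.1 - xs) + sqnorm (p.1 - p.2))%:E.
  by rewrite /Phi /= run_cat; case: run_state => [[? ?] ?].
rewrite /= in E.
under [X in X <= _]eq_integral do (under eq_integral do rewrite E).
under [X in _ <= _ * X + _]eq_integral do rewrite E.
case: (run_state F w om om x0 x0 a0 l) => [[x' xh'] vp'] /=.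
set h1 := (x' - om *: Fv F w vp' xh')%R.
have mX : mv (fun a => x' - om *: Fv F w a h1)%R.
  by apply: mv_sub; [exact: mv_cst | apply: mv_scale; exact: mv_Fv].
exact: (twolevel mw w0 Ew hF0 ER sig mu0 L0 de0 lip qsm om0 hq hr hp h1 mX).
Qed.

Lemma R0E : Eiid P 1 Phi = (sqnorm (x0 - xs))%:E.
Proof.
rewrite /= /Phi /= subrr.
have -> : sqnorm (0 : 'rV[R]_d) = 0%R.
  by rewrite /sqnorm big1 // => j _; rewrite mxE expr0n.
by rewrite addr0 int_cst.
Qed.

Lemma iterR k : Eiid P k.+1 Phi <= ((1 - om * mu / 2) ^+ k)%:E * Eiid P 1 Phi
   + (24 * om * sigma2 / mu)%:E.
Proof.
have rho0 : (0 <= 1 - om * mu / 2)%R by move: hp; nra.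
have sig0 : (0 <= sigma2)%R.
  by rewrite -lee_fin -sig; apply: integral_ge0 => s _; rewrite lee_fin sqnorm_ge0.
have C0 : (0 <= 24 * om * sigma2 / mu)%R.
  by apply: divr_ge0; [apply: mulr_ge0 => //; apply: mulr_ge0 => //; exact: ltW | exact: ltW].
elim: k => [|k IH].
  by rewrite expr0 mul1e leeDl // lee_fin.
apply: le_trans (step k) _.
apply: (@le_trans _ _ ((1 - om * mu / 2)%:E * (((1 - om * mu / 2) ^+ k)%:E * Eiid P 1 Phi
   + (24 * om * sigma2 / mu)%:E) + (12 * om ^+ 2 * sigma2)%:E)).
  by rewrite leeD2r // lee_wpmul2l // lee_fin.
have H (a : R) : ((1 - om * mu / 2) * (a + 24 * om * sigma2 / mu) + 12 * om ^+ 2 * sigma2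
  = (1 - om * mu / 2) * a + 24 * om * sigma2 / mu)%R.
  by field; exact: lt0r_neq0.
by rewrite R0E -!EFinM -!EFinD H exprS mulrA.
Qed.

End Main1.


Lemma mu_le_L (R : realType) (n d : nat) (F : 'I_n -> 'rV[R]_d -> 'rV[R]_d)
  (xs : 'rV[R]_d) (L mu : R) : (0 < d)%N -> Fbar F xs = 0 ->
  (forall x y, enorm (Fbar F x - Fbar F y) <= L * enorm (x - y)) ->
  (forall x, mu * sqnorm (x - xs) <= dotv (Fbar F x) (x - xs)) -> mu <= L.
Proof.
move=> dpos hF0 lip qsm.
pose j0 := Ordinal dpos.
pose e : 'rV[R]_d := delta_mx 0 j0.
have ee : xs + e - xs = e by rewrite addrAC subrr add0r.
have se : sqnorm e = 1.
  rewrite /sqnorm (bigD1 j0) //= big1 ?addr0.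
    by rewrite /e mxE !eqxx expr1n.
  by move=> j hj; rewrite /e mxE (negbTE hj) andbF expr0n.
have de (y : 'rV[R]_d) : dotv y e = y 0 j0.
  rewrite /dotv (bigD1 j0) //= big1 ?addr0.
    by rewrite /e mxE !eqxx mulr1.
  by move=> j hj; rewrite /e mxE (negbTE hj) andbF mulr0.
have yle (y : 'rV[R]_d) : y 0 j0 <= enorm y.
  apply: le_trans (ler_norm _) _.
  rewrite -sqrtr_sqr /enorm ler_wsqrtr //.
  rewrite /sqnorm (bigD1 j0) //= lerDl.
  by apply: sumr_ge0 => j _; exact: sqr_ge0.
have := qsm (xs + e); rewrite ee se mulr1 de => h1.
apply: le_trans h1 _; apply: le_trans (yle _) _.
have := lip (xs + e) xs; rewrite hF0 subr0 ee /enorm se sqrtr1 mulr1.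
exact.
Qed.

Lemma Eiid_ext (R : realType) (dV : measure_display) (V : measurableType dV)
  (P : probability V R) m (f g : seq V -> \bar R) :
  (forall s, f s = g s) -> Eiid P m f = Eiid P m g.
Proof.
elim: m f g => [|m IH] f g fg /=; first exact: fg.
by apply: eq_integral => v _; apply: IH => s.
Qed.

Lemma part1 (R : realType) (n d : nat) (dV : measure_display) (V : measurableType dV)
  (D : probability V R) (w : V -> 'I_n -> R)
  (F : 'I_n -> 'rV[R]_d -> 'rV[R]_d) (xs x0 : 'rV[R]_d)
  (L mu delta sigma2 : R) :
  (forall i, measurable_fun setT (fun s => w s i)) ->
  (forall s i, 0 <= w s i) ->
  (forall i, (\int[D]_s (w s i)%:E = 1)%E) ->
  Fbar F xs = 0 ->
  0 < L ->
  (forall x y, enorm (Fbar F x - Fbar F y) <= L * enorm (x - y)) ->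
  0 < mu ->
  (forall x, mu * sqnorm (x - xs) <= dotv (Fbar F x) (x - xs)) ->
  0 < delta ->
  (forall x, (\int[D]_s (sqnorm ((Fv F w s x - Fv F w s xs)
                                 - (Fbar F x - Fbar F xs)))%:E
              <= (delta / 2 * sqnorm (x - xs))%:E)%E) ->
  (\int[D]_s (sqnorm (Fv F w s xs))%:E = sigma2%:E)%E ->
  (forall omega, 0 < omega ->
     omega <= Num.min (mu / (18 * delta)) (1 / (4 * L)) ->
     forall k : nat,
       (SPEG_R2 D F w omega omega x0 xs k
        <= ((1 - omega * mu / 2) ^+ k)%:E * SPEG_R2 D F w omega omega x0 xs 0
           + (24 * omega * sigma2 / mu)%:E)%E).
Proof.
move=> mw w0 Ew hF0 L0 lip mu0 qsm de0 ER sig om om0 hmin k.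
have sig0 : 0 <= sigma2.
  by rewrite -lee_fin -sig; apply: integral_ge0 => s _; rewrite lee_fin sqnorm_ge0.
have C0 : 0 <= 24 * om * sigma2 / mu.
  by apply: divr_ge0; [apply: mulr_ge0 => //; apply: mulr_ge0 => //; exact: ltW | exact: ltW].
case: (posnP d) => [d0|dpos].
  subst d.
  have Z (x : 'rV[R]_0) : sqnorm x = 0 by rewrite /sqnorm big_ord0.
  have E (m : nat) : Eiid D m (fun s => let p := speg_iter F w om om x0 s in
      (sqnorm (p.1 - xs) + sqnorm (p.1 - p.2))%:E) = 0%E.
    by rewrite (@Eiid_ext R dV V D m _ (fun _ => 0%E)) ?Eiid_cst // => s /=; rewrite !Z addr0.
  by rewrite /SPEG_R2 !E mule0 add0e lee_fin.
have muL := mu_le_L dpos hF0 lip qsm.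
move: hmin; rewrite le_min => /andP[h1 h2].
have hq : om * delta <= mu / 18.
  move: h1; rewrite ler_pdivlMr ?mulr_gt0 // => h1; lra.
have hr : om * L <= 1 / 4.
  move: h2; rewrite ler_pdivlMr ?mulr_gt0 // => h2; lra.
have hp : om * mu <= 1 / 4.
  by apply: le_trans hr; rewrite ler_wpM2l // ltW.
exact: (iterR mw w0 Ew x0 hF0 ER sig mu0 L0 (ltW de0) lip qsm om0 hq hr hp k).
Qed.


Lemma tail_bound (R : realType) (t M r0 eps : R) (K : nat) : 0 < t -> t <= 1 ->
  1 <= t * M -> 0 < r0 -> 0 < eps -> M * ln (2 * r0 / eps) <= K%:R ->
  (1 - t) ^+ K * r0 <= eps / 2.
Proof.
move=> t0 t1 tM r00 eps0 hK.
set z := 2 * r0 / eps.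
have z0 : 0 < z by rewrite /z divr_gt0 // mulr_gt0.
have [z1|z1] := leP z 1.
  apply: (@le_trans _ _ r0).
    rewrite ler_piMl ?(ltW r00) // exprn_ile1 //; lra.
  by move: z1; rewrite /z ler_pdivrMr // mul1r; lra.
have lz : 0 < ln z by apply: ln_gt0.
have h1 : (1 - t) ^+ K <= expR (K%:R * - t).
  rewrite expRM_natl; apply: lerXn2r.
  - by rewrite nnegrE; lra.
  - by rewrite nnegrE expR_ge0.
  - by have := expR_ge1Dx (- t); lra.
have h2 : ln z <= t * K%:R.
  apply: (@le_trans _ _ (t * (M * ln z))); last by rewrite ler_wpM2l // ltW.
  by rewrite mulrA ler_peMl // ltW.
have h3 : expR (K%:R * - t) <= z^-1.
  rewrite -[X in _ <= X^-1](lnK z0) -expRN ler_expR; lra.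
apply: (@le_trans _ _ (z^-1 * r0)).
  by rewrite ler_wpM2r ?(ltW r00) // (le_trans h1 h3).
rewrite /z invf_div (_ : eps / (2 * r0) * r0 = eps / 2) //.
by field; rewrite lt0r_neq0.
Qed.

Lemma ratio_le (R : realType) (x y M : R) : 0 < x -> 0 < y -> x / y <= M ->
  1 <= (y / x) * M.
Proof.
move=> x0 y0 h; apply: le_trans (_ : (y / x) * (x / y) <= _).
  by rewrite le_eqVlt; apply/orP; left; apply/eqP; field; apply/andP; split; rewrite gt_eqF.
by rewrite ler_wpM2l // divr_ge0 // ltW.
Qed.

Lemma min_ind (R : realType) (a b : R) (Q : R -> Prop) : Q a -> Q b -> Q (Num.min a b).
Proof. by move=> qa qb; case: (leP a b). Qed.

Lemma part2 (R : realType) (n d : nat)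
  (dV : measure_display) (V : measurableType dV)
  (D : probability V R) (w : V -> 'I_n -> R)
  (F : 'I_n -> 'rV[R]_d -> 'rV[R]_d) (xs x0 : 'rV[R]_d)
  (L mu delta sigma2 : R) :
  (forall i, measurable_fun setT (fun s => w s i)) ->
  (forall s i, 0 <= w s i) ->
  (forall i, (\int[D]_s (w s i)%:E = 1)%E) ->
  Fbar F xs = 0 ->
  0 < L ->
  (forall x y, enorm (Fbar F x - Fbar F y) <= L * enorm (x - y)) ->
  0 < mu ->
  (forall x, mu * sqnorm (x - xs) <= dotv (Fbar F x) (x - xs)) ->
  0 < delta ->
  (forall x, (\int[D]_s (sqnorm ((Fv F w s x - Fv F w s xs)
                                 - (Fbar F x - Fbar F xs)))%:E
              <= (delta / 2 * sqnorm (x - xs))%:E)%E) ->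
  (\int[D]_s (sqnorm (Fv F w s xs))%:E = sigma2%:E)%E ->
  (forall eps, 0 < eps ->
     let omega :=
       if sigma2 == 0 then Num.min (mu / (18 * delta)) (1 / (4 * L))
       else Num.min (Num.min (mu / (18 * delta)) (1 / (4 * L)))
                    (eps * mu / (48 * sigma2)) in
     forall K : nat,
       Num.max (Num.max (8 * L / mu) (36 * delta / mu ^+ 2))
               (96 * sigma2 / (eps * mu ^+ 2))
         * ln (2 * fine (SPEG_R2 D F w omega omega x0 xs 0) / eps) <= K%:R ->
       (SPEG_dist2 D F w omega omega x0 xs K <= eps%:E)%E).
Proof.
move=> mw w0 Ew hF0 L0 lip mu0 qsm de0 ER sig eps eps0 omega K hK.
have sig0 : 0 <= sigma2.
  by rewrite -lee_fin -sig; apply: integral_ge0 => s _; rewrite lee_fin sqnorm_ge0.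
set M := Num.max (Num.max (8 * L / mu) (36 * delta / mu ^+ 2))
               (96 * sigma2 / (eps * mu ^+ 2)) in hK.
have om0 : 0 < omega.
  rewrite /omega; case: eqP => [_|s0].
    by apply: (min_ind (Q := fun x => 0 < x)); rewrite ?divr_gt0 ?mulr_gt0.
  have s0' : 0 < sigma2 by rewrite lt_def sig0 andbT; apply/eqP.
  by apply: (min_ind (Q := fun x => 0 < x)); [apply: (min_ind (Q := fun x => 0 < x))|];
    rewrite ?divr_gt0 ?mulr_gt0.
have hmin : omega <= Num.min (mu / (18 * delta)) (1 / (4 * L)).
  by rewrite /omega; case: eqP => _; [exact: lexx | rewrite ge_min lexx].
have P1 := @part1 R n d dV V D w F xs x0 L mu delta sigma2 mw w0 Ew hF0 L0 lip
  mu0 qsm de0 ER sig omega om0 hmin K.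
have R0 : SPEG_R2 D F w omega omega x0 xs 0 = (sqnorm (x0 - xs))%:E%E :=
  R0E D w F xs x0 omega.
rewrite R0 /= in hK.
have dl : (SPEG_dist2 D F w omega omega x0 xs K <= SPEG_R2 D F w omega omega x0 xs K)%E.
  rewrite /SPEG_dist2 /SPEG_R2.
  have := @Eiid_lin R dV V D K.+1
    (fun s => (sqnorm ((speg_iter F w omega omega x0 s).1 - xs))%:E)
    (fun s => let p := speg_iter F w omega omega x0 s in
       (sqnorm (p.1 - xs) + sqnorm (p.1 - p.2))%:E) 1 0.
  rewrite mul1e adde0; apply => //.
  - by move=> s; rewrite lee_fin sqnorm_ge0.
  - by move=> s /=; rewrite lee_fin addr_ge0 ?sqnorm_ge0.
  - by move=> s _ /=; rewrite mul1e adde0 lee_fin lerDl sqnorm_ge0.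
apply: le_trans dl _; apply: le_trans P1 _; rewrite R0 -EFinM -EFinD lee_fin.
set r0 := sqnorm (x0 - xs) in hK *.
have hC : 24 * omega * sigma2 / mu <= eps / 2.
  case: (eqVneq sigma2 0) => [->|s0]; first by rewrite mulr0 mul0r; lra.
  have hom : omega <= eps * mu / (48 * sigma2).
    by rewrite /omega (negbTE s0) ge_min lexx orbT.
  have s0' : 0 < sigma2 by rewrite lt_def s0 sig0.
  rewrite ler_pdivrMr //; move: hom; rewrite ler_pdivlMr ?mulr_gt0 //; lra.
suff hR : (1 - omega * mu / 2) ^+ K * r0 <= eps / 2 by lra.
have r0ge : 0 <= r0 by exact: sqnorm_ge0.
have [r00|r0ne] := eqVneq r0 0.
  by rewrite r00 mulr0; lra.
have r0pos : 0 < r0 by rewrite lt_def r0ne r0ge.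
have dpos : (0 < d)%N.
  case: (posnP d) => // d0; subst d.
  by move: r0pos; rewrite /r0 /sqnorm big_ord0 ltxx.
have muL := mu_le_L dpos hF0 lip qsm.
have hp : omega * mu <= 1 / 4.
  move: hmin; rewrite le_min => /andP[_ h2].
  move: h2; rewrite ler_pdivlMr ?mulr_gt0 // => h2.
  have : omega * mu <= omega * L by rewrite ler_wpM2l // ltW.
  lra.
apply: (tail_bound (M := M)) => //.
- by rewrite divr_gt0 // mulr_gt0.
- lra.
rewrite (_ : omega * mu / 2 * M = omega * (mu / 2) * M); last by rewrite mulrA.
have hM1 : 36 * delta / mu ^+ 2 <= M by rewrite /M !le_max lexx !(orbT, orTb).
have hM2 : 8 * L / mu <= M by rewrite /M !le_max lexx !(orbT, orTb).
have hM3 : 96 * sigma2 / (eps * mu ^+ 2) <= M by rewrite /M !le_max lexx !(orbT, orTb).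
have T1 : 1 <= mu / (18 * delta) * (mu / 2) * M.
  rewrite (_ : mu / (18 * delta) * (mu / 2) = mu ^+ 2 / (36 * delta)); last first.
    by field; rewrite gt_eqF.
  by apply: ratio_le; rewrite ?mulr_gt0 ?exprn_gt0.
have T2 : 1 <= 1 / (4 * L) * (mu / 2) * M.
  rewrite (_ : 1 / (4 * L) * (mu / 2) = mu / (8 * L)); last first.
    by field; rewrite gt_eqF.
  by apply: ratio_le; rewrite ?mulr_gt0.
rewrite /omega; case: eqP => [_|s0].
  by apply: (min_ind (Q := fun x => 1 <= x * (mu / 2) * M)).
have s0' : 0 < sigma2 by rewrite lt_def sig0 andbT; apply/eqP.
have T3 : 1 <= eps * mu / (48 * sigma2) * (mu / 2) * M.
  rewrite (_ : eps * mu / (48 * sigma2) * (mu / 2) = (eps * mu ^+ 2) / (96 * sigma2)); last first.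
    by field; rewrite gt_eqF.
  by apply: ratio_le; rewrite ?mulr_gt0 ?exprn_gt0.
apply: (min_ind (Q := fun x => 1 <= x * (mu / 2) * M)) => //.
exact: (min_ind (Q := fun x => 1 <= x * (mu / 2) * M)).
Qed.

Theorem theorem4p1 (R : realType) (n d : nat)
  (dV : measure_display) (V : measurableType dV)
  (D : probability V R) (w : V -> 'I_n -> R)
  (F : 'I_n -> 'rV[R]_d -> 'rV[R]_d) (xs x0 : 'rV[R]_d)
  (L mu delta sigma2 : R) :
  (0 < n)%N ->
  (* D is a sampling distribution: v = w s in R^n_+ with E[v_i] = 1 *)
  (forall i, measurable_fun setT (fun s => w s i)) ->
  (forall s i, 0 <= w s i) ->
  (forall i, (\int[D]_s (w s i)%:E = 1)%E) ->
  (* each F_i is (Borel) measurable on R^d *)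
  (forall i j, measurable_fun setT
     (fun t : d.-tuple R => F i (\row_(k < d) tnth t k) 0 j)) ->
  Fbar F xs = 0 ->
  0 < L ->
  (forall x y, enorm (Fbar F x - Fbar F y) <= L * enorm (x - y)) ->
  0 < mu ->
  (forall x, mu * sqnorm (x - xs) <= dotv (Fbar F x) (x - xs)) ->
  0 < delta ->
  (forall x, (\int[D]_s (sqnorm ((Fv F w s x - Fv F w s xs)
                                 - (Fbar F x - Fbar F xs)))%:E
              <= (delta / 2 * sqnorm (x - xs))%:E)%E) ->
  (\int[D]_s (sqnorm (Fv F w s xs))%:E = sigma2%:E)%E ->
  (forall omega, 0 < omega ->
     omega <= Num.min (mu / (18 * delta)) (1 / (4 * L)) ->
     forall k : nat,
       (SPEG_R2 D F w omega omega x0 xs k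
        <= ((1 - omega * mu / 2) ^+ k)%:E * SPEG_R2 D F w omega omega x0 xs 0
           + (24 * omega * sigma2 / mu)%:E)%E)
  /\
  (forall eps, 0 < eps ->
     let omega :=
       if sigma2 == 0 then Num.min (mu / (18 * delta)) (1 / (4 * L))
       else Num.min (Num.min (mu / (18 * delta)) (1 / (4 * L)))
                    (eps * mu / (48 * sigma2)) in
     forall K : nat,
       Num.max (Num.max (8 * L / mu) (36 * delta / mu ^+ 2))
               (96 * sigma2 / (eps * mu ^+ 2))
         * ln (2 * fine (SPEG_R2 D F w omega omega x0 xs 0) / eps) <= K%:R ->
       (SPEG_dist2 D F w omega omega x0 xs K <= eps%:E)%E).
Proof.
move=> hn mw w0 Ew mF hF0 L0 lip mu0 qsm de0 ER sig; split.
- exact: (@part1 R n d dV V D w F xs x0 L mu delta sigma2 mw w0 Ew hF0 L0 lip mu0 qsm de0 ER sig).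
- exact: (@part2 R n d dV V D w F xs x0 L mu delta sigma2 mw w0 Ew hF0 L0 lip mu0 qsm de0 ER sig).
Qed.
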